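(* The monoidal category $\mathcal{TL}_0(\Bbbk)$ is not rigid.
   Context: $\Bbbk$ is a field. $\mathcal{TL}_0(\Bbbk)$ is the strict $\Bbbk$-linear monoidal category with objects $\mathbf 0,\mathbf 1,\dots$, $\mathbf m\otimes\mathbf n=\mathbf{m+n}$, unit $\mathbf 0$, whose morphisms are generated under composition, tensor product and linear combination by $\mathrm{cup}:\mathbf 0\to\mathbf 2$ and $\mathrm{cap}:\mathbf 2\to\mathbf 0$ subject to $(\mathrm{id}_{\mathbf 1}\otimes\mathrm{cap})\circ(\mathrm{cup}\otimes\mathrm{id}_{\mathbf 1})=0$, $(\mathrm{cap}\otimes\mathrm{id}_{\mathbf 1})\circ(\mathrm{id}_{\mathbf 1}\otimes\mathrm{cup})=0$ and $\mathrm{cap}\circ\mathrm{cup}=\mathrm{id}_{\mathbf 0}$. A monoidal category is rigid if every object has both a left and a right dual. *)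

(* Defs.v *)
(* The category TL_0(k) is presented by generators and
   relations: morphisms are (raw, typed) terms built from identities, cup, cap,
   composition, tensor product and linear combinations, modulo the smallest
   congruence containing the axioms of a strict k-linear monoidal category
   and the three defining relations. *)
From mathcomp Require Import all_boot all_algebra.
Set Implicit Arguments. Unset Strict Implicit. Unset Printing Implicit Defensive.
Import GRing.Theory.

Section TL0.
Variable k : fieldType.

(* Raw morphism terms; objects are natural numbers, m (x) n = m + n. *)
Inductive tm : Type :=
| tid   : nat -> tm
| tcup  : tm
| tcap  : tm
| tcomp : tm -> tm -> tm            (* tcomp f g = f o g *)
| ttens : tm -> tm -> tm
| tzero : nat -> nat -> tm
| tadd  : tm -> tm -> tm
| tscale : k -> tm -> tm.

Fixpoint src (f : tm) : nat :=
  match f with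
  | tid n => n | tcup => 0 | tcap => 2
  | tcomp _ g => src g
  | ttens f g => (src f + src g)%N
  | tzero m _ => m
  | tadd f _ => src f
  | tscale _ f => src f
  end.

Fixpoint tgt (f : tm) : nat :=
  match f with
  | tid n => n | tcup => 2 | tcap => 0
  | tcomp f _ => tgt f
  | ttens f g => (tgt f + tgt g)%N
  | tzero _ n => n
  | tadd f _ => tgt f
  | tscale _ f => tgt f
  end.

Fixpoint wt (f : tm) : Prop :=
  match f with
  | tid _ | tcup | tcap | tzero _ _ => True
  | tcomp f g => [/\ wt f, wt g & src f = tgt g]
  | ttens f g => wt f /\ wt g
  | tadd f g => [/\ wt f, wt g, src f = src g & tgt f = tgt g]
  | tscale _ f => wt f
  end.

Definition hom (m n : nat) (f : tm) : Prop := [/\ wt f, src f = m & tgt f = n].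

Inductive eqv : tm -> tm -> Prop :=
| eqv_refl f : eqv f f
| eqv_sym f g : eqv f g -> eqv g f
| eqv_trans f g h : eqv f g -> eqv g h -> eqv f h
| eqv_comp f f' g g' : eqv f f' -> eqv g g' -> eqv (tcomp f g) (tcomp f' g')
| eqv_tens f f' g g' : eqv f f' -> eqv g g' -> eqv (ttens f g) (ttens f' g')
| eqv_add f f' g g' : eqv f f' -> eqv g g' -> eqv (tadd f g) (tadd f' g')
| eqv_scale a f f' : eqv f f' -> eqv (tscale a f) (tscale a f')
| eqv_compA m n p q f g h : hom p q f -> hom n p g -> hom m n h ->
    eqv (tcomp f (tcomp g h)) (tcomp (tcomp f g) h)
| eqv_id_l m n f : hom m n f -> eqv (tcomp (tid n) f) f
| eqv_id_r m n f : hom m n f -> eqv (tcomp f (tid m)) f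
| eqv_tensA f g h : wt f -> wt g -> wt h ->
    eqv (ttens f (ttens g h)) (ttens (ttens f g) h)
| eqv_tens_unit_l f : wt f -> eqv (ttens (tid 0) f) f
| eqv_tens_unit_r f : wt f -> eqv (ttens f (tid 0)) f
| eqv_tens_id m n : eqv (ttens (tid m) (tid n)) (tid (m + n))
| eqv_interchange m n p m' n' p' f f' g g' :
    hom n p f -> hom m n g -> hom n' p' f' -> hom m' n' g' ->
    eqv (tcomp (ttens f f') (ttens g g')) (ttens (tcomp f g) (tcomp f' g'))
| eqv_addA m n f g h : hom m n f -> hom m n g -> hom m n h ->
    eqv (tadd f (tadd g h)) (tadd (tadd f g) h)
| eqv_addC m n f g : hom m n f -> hom m n g -> eqv (tadd f g) (tadd g f)
| eqv_add0 m n f : hom m n f -> eqv (tadd (tzero m n) f) f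
| eqv_addN m n f : hom m n f -> eqv (tadd f (tscale (-1)%R f)) (tzero m n)
| eqv_scale1 f : wt f -> eqv (tscale 1%R f) f
| eqv_scaleA a b f : wt f -> eqv (tscale a (tscale b f)) (tscale (a * b)%R f)
| eqv_scaleDl a b f : wt f -> eqv (tscale (a + b)%R f) (tadd (tscale a f) (tscale b f))
| eqv_scaleDr m n a f g : hom m n f -> hom m n g ->
    eqv (tscale a (tadd f g)) (tadd (tscale a f) (tscale a g))
| eqv_compDl m n p f g h : hom n p f -> hom n p g -> hom m n h ->
    eqv (tcomp (tadd f g) h) (tadd (tcomp f h) (tcomp g h))
| eqv_compDr m n p f g h : hom n p f -> hom m n g -> hom m n h ->
    eqv (tcomp f (tadd g h)) (tadd (tcomp f g) (tcomp f h))
| eqv_compZl m n p a f g : hom n p f -> hom m n g ->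
    eqv (tcomp (tscale a f) g) (tscale a (tcomp f g))
| eqv_compZr m n p a f g : hom n p f -> hom m n g ->
    eqv (tcomp f (tscale a g)) (tscale a (tcomp f g))
| eqv_tensDl m n f g h : hom m n f -> hom m n g -> wt h ->
    eqv (ttens (tadd f g) h) (tadd (ttens f h) (ttens g h))
| eqv_tensDr m n f g h : wt f -> hom m n g -> hom m n h ->
    eqv (ttens f (tadd g h)) (tadd (ttens f g) (ttens f h))
| eqv_tensZl a f g : wt f -> wt g ->
    eqv (ttens (tscale a f) g) (tscale a (ttens f g))
| eqv_tensZr a f g : wt f -> wt g ->
    eqv (ttens f (tscale a g)) (tscale a (ttens f g))
| eqv_zigzag1 :
    eqv (tcomp (ttens (tid 1) tcap) (ttens tcup (tid 1))) (tzero 1 1)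
| eqv_zigzag2 :
    eqv (tcomp (ttens tcap (tid 1)) (ttens (tid 1) tcup)) (tzero 1 1)
| eqv_loop : eqv (tcomp tcap tcup) (tid 0).

Definition has_left_dual (m : nat) : Prop :=
  exists d ev coev,
    [/\ hom (d + m) 0 ev, hom 0 (m + d) coev,
        eqv (tcomp (ttens (tid m) ev) (ttens coev (tid m))) (tid m)
      & eqv (tcomp (ttens ev (tid d)) (ttens (tid d) coev)) (tid d)].

Definition has_right_dual (m : nat) : Prop :=
  exists d ev coev,
    [/\ hom (m + d) 0 ev, hom 0 (d + m) coev,
        eqv (tcomp (ttens ev (tid m)) (ttens (tid m) coev)) (tid m)
      & eqv (tcomp (ttens (tid d) ev) (ttens coev (tid d))) (tid d)].

Definition TL0_rigid : Prop := forall m : nat, has_left_dual m /\ has_right_dual m.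

End TL0.

(* Main.v *)
Require Import Defs.
From mathcomp Require Import all_boot all_algebra.
Set Implicit Arguments. Unset Strict Implicit. Unset Printing Implicit Defensive.
Import GRing.Theory.

Section Model.
Variable k : fieldType.
Local Open Scope ring_scope.

Definition ind (b : bool) : k := if b then 1 else 0.
Lemma indA a b : ind (a && b) = ind a * ind b.
Proof. by case: a; case: b; rewrite /ind ?mulr1 ?mulr0. Qed.

Fixpoint sumT (n : nat) (F : seq 'I_3 -> k) : k :=
  match n with
  | 0 => F [::]
  | n'.+1 => \sum_(x < 3) sumT n' (fun u => F (x :: u))
  end.

Lemma sumT_ext n F G : (forall u, size u = n -> F u = G u) -> sumT n F = sumT n G.
Proof.
elim: n F G => [|n IH] F G H /=; first by rewrite H.
by apply: eq_bigr => x _; apply: IH => u Hu; rewrite H //= Hu.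
Qed.

Lemma sumT0 n F : (forall u, size u = n -> F u = 0) -> sumT n F = 0.
Proof.
elim: n F => [|n IH] F H /=; first by rewrite H.
by apply: big1 => x _; apply: IH => u Hu; rewrite H //= Hu.
Qed.

Lemma sumTD n F G : sumT n (fun u => F u + G u) = sumT n F + sumT n G.
Proof.
elim: n F G => [|n IH] F G //=.
by rewrite -big_split /=; apply: eq_bigr => x _; rewrite IH.
Qed.

Lemma sumTMl n c F : sumT n (fun u => c * F u) = c * sumT n F.
Proof.
elim: n F => [|n IH] F //=.
by rewrite mulr_sumr; apply: eq_bigr => x _; rewrite IH.
Qed.

Lemma sumTMr n c F : sumT n (fun u => F u * c) = sumT n F * c.
Proof.
elim: n F => [|n IH] F //=.
by rewrite mulr_suml; apply: eq_bigr => x _; rewrite IH.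
Qed.

Lemma sumT_big m (G : 'I_3 -> seq 'I_3 -> k) :
  sumT m (fun v => \sum_(x < 3) G x v) = \sum_(x < 3) sumT m (G x).
Proof.
elim: m G => [|m IH] G //=.
rewrite exchange_big /=; apply: eq_bigr => y _.
by rewrite -IH.
Qed.

Lemma sumT_swap n m (F : seq 'I_3 -> seq 'I_3 -> k) :
  sumT n (fun u => sumT m (fun v => F u v)) = sumT m (fun v => sumT n (fun u => F u v)).
Proof.
elim: n F => [|n IH] F //=.
rewrite sumT_big; apply: eq_bigr => x _.
exact: (IH (fun u v => F (x :: u) v)).
Qed.

Lemma sumT_cat a b F :
  sumT (a + b) F = sumT a (fun u => sumT b (fun v => F (u ++ v))).
Proof.
elim: a F => [|a IH] F //=.
apply: eq_bigr => x _.
by rewrite IH.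
Qed.

Lemma sumT_delta n t F :
  sumT n (fun u => ind (u == t) * F u) = ind (size t == n) * F t.
Proof.
elim: n t F => [|n IH] [|y t] F /=.
- by [].
- by rewrite /ind /= !mul0r.
- by rewrite /ind mul0r; apply: big1 => x _; apply: sumT0 => u _; rewrite mul0r.
- rewrite (bigD1 y) //= big1 ?addr0.
    rewrite -(IH t (fun u => F (y :: u))); apply: sumT_ext => u _.
    by rewrite eqseq_cons eqxx.
  move=> x /negbTE Hxy; apply: sumT0 => u _.
  by rewrite eqseq_cons Hxy /ind mul0r.
Qed.

Definition a0 : 'I_3 := @Ordinal 3 0 isT.
Definition a1 : 'I_3 := @Ordinal 3 1 isT.
Definition a2 : 'I_3 := @Ordinal 3 2 isT.
Lemma a01 : (a0 == a1) = false. Proof. by []. Qed.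

Fixpoint den (f : tm k) (s t : seq 'I_3) : k :=
  match f with
  | tid n => ind ((size s == n) && (s == t))
  | tcup => ind ((s == [::]) && (t == [:: a0; a1]))
  | tcap => ind ((s == [:: a0; a1]) && (t == [::]))
  | tcomp f g => sumT (src f) (fun u => den f u t * den g s u)
  | ttens f g => den f (take (src f) s) (take (tgt f) t) *
                 den g (drop (src f) s) (drop (tgt f) t)
  | tzero _ _ => 0
  | tadd f g => den f s t + den g s t
  | tscale a f => a * den f s t
  end.

Lemma size_td (s : seq 'I_3) n : size s = (size (take n s) + size (drop n s))%N.
Proof. by rewrite -size_cat cat_take_drop. Qed.

Lemma den_s f s t : wt f -> size s != src f -> den f s t = 0.
Proof.
elim: f s t => /=.
- by move=> n s t _ /negbTE ->.
- by move=> s t _; case: s.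
- move=> s t _ H; case: eqP => // Hs; by rewrite Hs in H.
- move=> f IHf g IHg s t [wf wg _] H; apply: sumT0 => u _.
  by rewrite IHg ?mulr0.
- move=> f IHf g IHg s t [wf wg] H.
  case E: (size (take (src f) s) == src f); last by rewrite IHf ?E ?mul0r.
  rewrite (IHg _ _ wg) ?mulr0 //; apply/negP => /eqP E2.
  by move/eqP: E => E; rewrite (size_td s (src f)) E E2 eqxx in H.
- by [].
- move=> f IHf g IHg s t [wf wg Hs _] H; rewrite IHf // IHg ?addr0 //.
  by rewrite -Hs.
- by move=> a f IHf s t wf H; rewrite IHf ?mulr0.
Qed.

Lemma den_t f s t : wt f -> size t != tgt f -> den f s t = 0.
Proof.
elim: f s t => /=.
- move=> n s t _ H; case: eqP => Hs //=; case: eqP => Ht //=.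
  by rewrite -Ht Hs eqxx in H.
- move=> s t _ H; have /negbTE -> : t != [:: a0; a1] by apply: contraNneq H => ->.
  by rewrite andbF.
- move=> s t _ H; have /negbTE -> : t != [::] by apply: contraNneq H => ->.
  by rewrite andbF.
- move=> f IHf g IHg s t [wf wg _] H; apply: sumT0 => u _.
  by rewrite IHf ?mul0r.
- move=> f IHf g IHg s t [wf wg] H.
  case E: (size (take (tgt f) t) == tgt f); last by rewrite IHf ?E ?mul0r.
  rewrite (IHg _ _ wg) ?mulr0 //; apply/negP => /eqP E2.
  by move/eqP: E => E; rewrite (size_td t (tgt f)) E E2 eqxx in H.
- by [].
- move=> f IHf g IHg s t [wf wg _ Ht] H; rewrite IHf // IHg ?addr0 //.
  by rewrite -Ht.
- by move=> a f IHf s t wf H; rewrite IHf ?mulr0.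
Qed.

Definition c2 (s : seq 'I_3) := count_mem a2 s.

Lemma count_td (s : seq 'I_3) n : c2 s = (c2 (take n s) + c2 (drop n s))%N.
Proof. by rewrite /c2 -count_cat cat_take_drop. Qed.

Lemma den_c f s t : c2 s != c2 t -> den f s t = 0.
Proof.
elim: f s t => /=.
- move=> n s t H; have /negbTE -> : s != t by apply: contraNneq H => ->.
  by rewrite andbF.
- move=> s t H; case: (s =P [::]) => [Es|] //=; case: (t =P [:: a0; a1]) => [Et|] //=;
    by [move: H; rewrite Es Et | rewrite andbF].
- move=> s t H; case: (s =P [:: a0; a1]) => [Es|] //=; case: (t =P [::]) => [Et|] //=;
    by [move: H; rewrite Es Et | rewrite andbF].
- move=> f IHf g IHg s t H; apply: sumT0 => u _.
  case E: (c2 s == c2 u); last by rewrite IHg ?E ?mulr0.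
  by rewrite IHf ?mul0r // -(eqP E).
- move=> f IHf g IHg s t H.
  case E: (c2 (take (src f) s) == c2 (take (tgt f) t)); last by rewrite IHf ?E ?mul0r.
  rewrite IHg ?mulr0 //; apply/negP => /eqP E2.
  by rewrite (count_td s (src f)) (count_td t (tgt f)) (eqP E) E2 eqxx in H.
- by [].
- by move=> f IHf g IHg s t H; rewrite IHf // IHg // addr0.
- by move=> a f IHf s t H; rewrite IHf // mulr0.
Qed.


Definition M (f g : tm k) := forall s t, den f s t = den g s t.

Lemma ind1 (b : bool) : b -> ind b = 1. Proof. by move=> ->. Qed.
Lemma ind0 (b : bool) : ~~ b -> ind b = 0. Proof. by move/negbTE ->. Qed.

Lemma eqv_sound f g : eqv f g -> M f g /\ src f = src g /\ tgt f = tgt g.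
Proof.
elim => {f g} /=.
- by [].
- by move=> f g _ [H [H1 H2]]; split => // s t; rewrite H.
- by move=> f g h _ [H [H1 H2]] _ [H' [H1' H2']]; split => [s t|]; rewrite ?H ?H' ?H1 ?H2.
- move=> f f' g g' _ [Hf [Sf Tf]] _ [Hg [Sg Tg]]; split => // s t /=.
  by rewrite Sf; apply: sumT_ext => u _; rewrite Hf Hg.
- move=> f f' g g' _ [Hf [Sf Tf]] _ [Hg [Sg Tg]]; split; last by rewrite Sf Sg Tf Tg.
  by move=> s t /=; rewrite Sf Tf Hf Hg.
- by move=> f f' g g' _ [Hf [Sf Tf]] _ [Hg [Sg Tg]]; split => // s t /=; rewrite Hf Hg.
- by move=> a f f' _ [Hf [Sf Tf]]; split => // s t /=; rewrite Hf.
-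
  move=> m n p q f g h _ _ _; split => // s t /=.
  rewrite (sumT_ext (G := fun u => sumT (src g) (fun v => den f u t * (den g v u * den h s v)))); last by move=> u _; rewrite sumTMl.
  rewrite sumT_swap; apply: sumT_ext => v _.
  by rewrite -sumTMr; apply: sumT_ext => u _; rewrite mulrA.
-
  move=> m n f [wf Sf Tf]; split => // s t /=.
  rewrite (sumT_ext (G := fun u => ind (u == t) * den f s u)); last first.
    by move=> u Hu; rewrite Hu eqxx.
  rewrite sumT_delta; case E: (size t == n); first by rewrite ind1 ?mul1r.
  by rewrite den_t ?Tf ?E ?mulr0.
-
  move=> m n f [wf Sf Tf]; split => // s t /=.
  rewrite (sumT_ext (G := fun u => ind (u == s) * (ind (size s == m) * den f u t))); last first.
    by move=> u Hu; rewrite indA (eq_sym s u) mulrC -mulrA mulrCA.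
  rewrite sumT_delta Sf; case E: (size s == m); first by rewrite !ind1 ?mul1r.
  by rewrite den_s ?Sf ?E ?mulr0.
-
  move=> f g h wf wg wh; split; last by rewrite !addnA.
  move=> s t /=; rewrite mulrA; congr (_ * _ * _).
  + by rewrite !take_takel ?leq_addr.
  + by rewrite !take_drop (addnC (src g)) (addnC (tgt g)).
  + by rewrite !drop_drop (addnC (src g)) (addnC (tgt g)).
-
  by move=> f wf; split => // s t /=; rewrite !take0 !drop0 /ind /= mul1r.
-
  move=> f wf; split; last by rewrite !addn0.
  move=> s t /=.
  case Es: (size s == src f).
    rewrite take_oversize ?(eqP Es) // drop_oversize ?(eqP Es) //=.
    case Et: (size t == tgt f).
      by rewrite take_oversize ?(eqP Et) // drop_oversize ?(eqP Et) //= mulr1.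
    rewrite [RHS](den_t s wf) ?Et //.
    case Et2: (size (take (tgt f) t) == tgt f); last by rewrite den_t ?Et2 ?mul0r.
    rewrite ind0 ?mulr0 //; apply/negP => /eqP E.
    move: (size_td t (tgt f)); rewrite (eqP Et2) -E addn0 => E2.
    by rewrite E2 eqxx in Et.
  rewrite [RHS](den_s t wf) ?Es //.
  case Es2: (size (take (src f) s) == src f); last by rewrite den_s ?Es2 ?mul0r.
  rewrite ind0 ?mulr0 //; apply/negP => /andP [/eqP E _].
  move: (size_td s (src f)); rewrite (eqP Es2) E addn0 => E2.
  by rewrite E2 eqxx in Es.
-
  move=> m n; split => // s t /=; rewrite -indA; congr ind.
  apply/idP/idP.
    case/andP => /andP [/eqP H1 /eqP H2] /andP [/eqP H3 /eqP H4].
    have Est : s = t by rewrite -(cat_take_drop m s) H2 H4 cat_take_drop.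
    by rewrite (size_td s m) H1 H3 Est !eqxx.
  case/andP => /eqP Hs /eqP <-; rewrite size_takel ?Hs ?leq_addr //.
  by rewrite size_drop Hs addKn !eqxx.
-
  move=> m n p m' n' p' f f' g g' [wf Sf Tf] [wg Sg Tg] [wf' Sf' Tf'] [wg' Sg' Tg'].
  split => //.
  move=> s t /=; rewrite Sf Sf' Tf Sg Tg sumT_cat -sumTMr.
  apply: sumT_ext => u Hu; rewrite -sumTMl; apply: sumT_ext => v Hv.
  rewrite take_size_cat // drop_size_cat //.
  exact: mulrACA.
-
  by move=> m n f g h _ _ _; split => // s t /=; rewrite addrA.
- move=> m n f g [_ Sf Tf] [_ Sg Tg]; split => [s t /=|]; first exact: addrC.
  by rewrite Sf Sg Tf Tg.
- by move=> m n f [_ Sf Tf]; split => [s t /=|]; rewrite ?add0r ?Sf ?Tf.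
- by move=> m n f [_ Sf Tf]; split => [s t /=|]; rewrite ?mulN1r ?subrr ?Sf ?Tf.
- by move=> f _; split => // s t /=; rewrite mul1r.
- by move=> a b f _; split => // s t /=; rewrite mulrA.
- by move=> a b f _; split => // s t /=; rewrite mulrDl.
- by move=> m n a f g _ _; split => // s t /=; rewrite mulrDr.
- move=> m n p f g h [_ Sf Tf] [_ Sg Tg] _; split => [s t /=|]; last by rewrite Tf.
  by rewrite Sg -Sf -sumTD; apply: sumT_ext => u _; rewrite mulrDl.
- move=> m n p f g h _ _ _; split => // s t /=.
  by rewrite -sumTD; apply: sumT_ext => u _; rewrite mulrDr.
- move=> m n p a f g _ _; split => // s t /=.
  by rewrite -sumTMl; apply: sumT_ext => u _; rewrite mulrA.
- move=> m n p a f g _ _; split => // s t /=.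
  by rewrite -sumTMl; apply: sumT_ext => u _; rewrite mulrCA.
- move=> m n f g h [_ Sf Tf] [_ Sg Tg] _; split => [s t /=|//].
  by rewrite Sg Tg -Sf -Tf mulrDl.
- by move=> m n f g h _ _ _; split => // s t /=; rewrite mulrDr.
- by move=> a f g _ _; split => // s t /=; rewrite mulrA.
- by move=> a f g _ _; split => // s t /=; rewrite mulrCA.
-
  split => // s t; apply: sumT0 => u Hu.
  case: u Hu => [|x [|y [|z [|]]]] //= _.
  rewrite !drop0 !take0.
  case: (eqVneq y a0) => [->|Hy]; rewrite !eqseq_cons ?a01 ?(negbTE Hy) ?andbF ?andFb /ind /=;
    by rewrite ?(mulr0, mul0r).
-
  split => // s t; apply: sumT0 => u Hu.
  case: u Hu => [|x [|y [|z [|]]]] //= _.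
  rewrite !drop0 !take0.
  case: (eqVneq y a0) => [->|Hy]; rewrite !eqseq_cons ?a01 ?(negbTE Hy) ?andbF ?andFb /ind /=;
    by rewrite ?(mulr0, mul0r).
-
  split => // s t.
  change (sumT 2 (fun u => den (tcap k) u t * den (tcup k) s u) = den (tid k 0) s t).
  rewrite (sumT_ext (G := fun u => ind (u == [:: a0; a1]) * (ind (s == [::]) * ind (t == [::])))).
    rewrite sumT_delta /= /ind; case: s => [|x s]; case: t => [|y t] /=;
    by rewrite ?(mulr0, mul0r, mulr1, mul1r).
  move=> u _ /=; rewrite /ind; case: (u == _); case: (s == _); case: (t == _) => /=;
    by rewrite ?(mulr0, mul0r, mulr1, mul1r).
Qed.

End Model.

Theorem mainTheorem12 (k : fieldType) : ~ TL0_rigid k.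
Proof.
move=> H; case: (H 1%N) => [[d [ev [coev [[wev Sev Tev] [wco Sco Tco] Hsn _]]]] _].
have [HM _] := eqv_sound Hsn.
have := HM [:: a2] [:: a2].
have -> : den (tid k 1) [:: a2] [:: a2] = 1%R by rewrite /= ?eqxx.
change (sumT (src (ttens (tid k 1) ev)) (fun u => (den (ttens (tid k 1) ev) u [:: a2] *
  den (ttens coev (tid k 1)) [:: a2] u)%R) = 1%R -> False).
rewrite sumT0 => [|u _]; first by move/eqP; rewrite eq_sym oner_eq0.
change ((den (tid k 1) (take 1 u) (take 1 [:: a2]) * den ev (drop 1 u) (drop 1 [:: a2]) *
  (den coev (take (src coev) [:: a2]) (take (tgt coev) u) *
   den (tid k 1) (drop (src coev) [:: a2]) (drop (tgt coev) u)))%R = 0%R).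
rewrite Sco Tco.
case E: (drop (1 + d) u == [:: a2]).
  rewrite (den_c ev (s:=drop 1 u) (t:=drop 1 [:: a2])) ?(mulr0, mul0r) //.
  rewrite (count_td (drop 1 u) d) drop_drop (addnC d 1) (eqP E) /=.
  by rewrite addn1.
rewrite (_ : den (tid k 1) (drop 0 [:: a2]) (drop (1 + d) u) = 0%R) ?(mulr0, mul0r) //.
have ne : ([:: a2] == drop (1 + d) u) = false by rewrite eq_sym E.
by rewrite /= ne ?andbF.
Qed.
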